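(* Let $\mathcal F\subseteq 2^{[n]}$ be a simply rooted family of sets such that $\emptyset\in\mathcal F$. For $0\le k\le n$ let $\mathcal C_k(\mathcal F)=\{[A,B]: A\subseteq B,\ [A,B]\subseteq\mathcal F,\ |B\setminus A|=k\}$. Then $$\sum_{k=0}^n (-1)^k|\mathcal C_k(\mathcal F)|=1.$$
   Context: $[n]=\{1,\dots,n\}$, $2^{[n]}$ its power set, and $[A,B]=\{C\in 2^{[n]}: A\subseteq C\subseteq B\}$; $[i,A]$ means $[\{i\},A]$. A family $\mathcal F\subseteq 2^{[n]}$ is simply rooted if for every non-empty $A\in\mathcal F$ there is $i\in A$ with $[i,A]\subseteq\mathcal F$. *)

(* Defs.v *)
From mathcomp Require Import all_boot all_order all_algebra.
Set Implicit Arguments. Unset Strict Implicit. Unset Printing Implicit Defensive.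
Import GRing.Theory Num.Theory.

(* Ground set [n] is modelled by 'I_n; subsets of [n] by {set 'I_n}. *)

Definition interval (n : nat) (A B : {set 'I_n}) : {set {set 'I_n}} :=
  [set C : {set 'I_n} | (A \subset C) && (C \subset B)].

Definition simply_rooted (n : nat) (F : {set {set 'I_n}}) : Prop :=
  forall A, A \in F -> A != set0 ->
    exists2 i, i \in A & interval [set i] A \subset F.

(* C_k(F): intervals [A,B] (A ⊆ B) contained in F with |B \ A| = k.
   An interval [A,B] with A ⊆ B determines (A,B) (A its min, B its max),
   so intervals are represented by the pairs (A,B). *)
Definition Ck (n : nat) (F : {set {set 'I_n}}) (k : nat)
  : {set {set 'I_n} * {set 'I_n}} :=
  [set AB : {set 'I_n} * {set 'I_n} | (AB.1 \subset AB.2) && (interval AB.1 AB.2 \subset F)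
            && (#|AB.2 :\: AB.1| == k)].

(* Main.v *)
Require Import Defs.
From mathcomp Require Import all_boot all_order all_algebra.
Import GRing.Theory Num.Theory.
Local Open Scope ring_scope.

Section Aux.
Variable n : nat.
Implicit Types A B S C : {set 'I_n}.

Lemma split_sub (f : {set 'I_n} -> int) S j : j \in S ->
  \sum_(A : {set 'I_n} | A \subset S) f A = \sum_(A : {set 'I_n} | A \subset S :\ j) (f A + f (j |: A)).
Proof.
move=> jS; rewrite big_split /= (bigID (fun A => j \in A)) /= addrC.
congr (_ + _).
  apply: eq_bigl => A; apply/idP/idP.
    by case/andP=> AS jA; apply/subsetP=> x xA; rewrite !inE (subsetP AS) // andbT; apply: contraNneq jA => <-.
  move=> AS; have /subsetP h := AS; apply/andP; split.
    by apply/subsetP=> x /h; rewrite inE => /andP[].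
  by apply/negP=> /h; rewrite !inE eqxx.
rewrite (reindex_onto (fun A => j |: A) (fun A => A :\ j)) /=; last first.
  by move=> A /andP[_ jA]; rewrite setD1K.
apply: eq_bigl => A; rewrite setU11 andbT subUset sub1set jS /=.
apply/idP/idP.
  case/andP=> AS /eqP e; rewrite -e; apply: setSD; by rewrite subUset sub1set jS.
move=> AS; have /subsetP h := AS; apply/andP; split.
  by apply/subsetP=> x /h; rewrite inE => /andP[].
apply/eqP/setP=> x; rewrite !inE; case: eqVneq => [->|] //=.
by apply/esym/negP=> /h; rewrite !inE eqxx.
Qed.

Lemma card_step S A j : j \in S -> A \subset S :\ j ->
  #|S :\: A| = (#|S :\: (j |: A)|).+1.
Proof.
move=> jS AS; rewrite (cardsD1 j) !inE jS andbT.
have -> : j \notin A by apply/negP=> /(subsetP AS); rewrite !inE eqxx.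
rewrite add1n; congr (_.+1); apply: eq_card => x; rewrite !inE.
by case: eqVneq.
Qed.

Lemma sum_sign S : \sum_(A : {set 'I_n} | A \subset S) (-1) ^+ #|S :\: A| = (S == set0)%:R :> int.
Proof.
case: (set_0Vmem S) => [->|[j jS]].
  rewrite eqxx (eq_bigl (pred1 set0)); last by move=> A; rewrite subset0.
  by rewrite big_pred1_eq setD0 cards0.
have -> : (S == set0) = false by apply/negP=> /eqP S0; rewrite S0 inE in jS.
rewrite (split_sub _ _ _ jS) big1 // => A AS.
by rewrite (card_step _ _ _ jS AS) exprS mulN1r addNr.
Qed.
End Aux.

Section T.
Variable n : nat.
Variable F : {set {set 'I_n}}.

Definition T (B : {set 'I_n}) : int :=
  \sum_(A : {set 'I_n} | A \subset B)
     (if Defs.interval A B \subset F then (-1) ^+ #|B :\: A| else 0).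

Lemma in_interval (A B C : {set 'I_n}) : (C \in Defs.interval A B) = (A \subset C) && (C \subset B).
Proof. by rewrite /Defs.interval inE. Qed.

Lemma Tnot B : B \notin F -> T B = 0.
Proof.
move=> BF; apply: big1 => A AB; case: ifP => // /subsetP h.
by case/negP: BF; apply: h; rewrite in_interval AB subxx.
Qed.

Lemma Tset0 : set0 \in F -> T set0 = 1.
Proof.
move=> F0; rewrite /T (eq_bigl (pred1 set0)); last by move=> A; rewrite subset0.
rewrite big_pred1_eq setD0 cards0 expr0; case: ifP => // /negP[].
by apply/subsetP=> C; rewrite in_interval subset0 sub0set => /eqP ->.
Qed.

Lemma T0 : simply_rooted F -> set0 \in F ->
  forall B, B \in F -> B != set0 -> T B = 0.
Proof.
move=> sr F0 B; have [m] := ubnP #|B|; elim: m B => // m IH B /ltnSE Bm BF B0.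
have [i iB sub] := sr B BF B0.
have e : T B = \sum_(A : {set 'I_n} | A \subset B :\ i) (-1) ^+ #|(B :\ i) :\: A|
               - T (B :\ i).
  rewrite /T (split_sub _ _ _ _ iB) -sumrB; apply: eq_bigr => A AB'.
  have AB : A \subset B by apply: subset_trans AB' (subD1set _ _).
  have c1 : #|B :\: (i |: A)| = #|(B :\ i) :\: A|.
    by apply: eq_card => x; rewrite !inE; case: (x == i); case: (x \in A).
  rewrite (card_step _ _ _ _ iB AB') c1.
  have -> : Defs.interval (i |: A) B \subset F.
    apply: subset_trans sub; apply/subsetP=> C; rewrite !in_interval.
    case/andP=> /subsetP h ->; rewrite andbT sub1set; apply: h; by rewrite !inE eqxx.
  have -> : (Defs.interval A B \subset F) = (Defs.interval A (B :\ i) \subset F).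
    apply/idP/idP.
      apply: subset_trans; apply/subsetP=> C; rewrite !in_interval.
      by case/andP=> -> /subset_trans; apply; apply: subD1set.
    move=> /subsetP h; apply/subsetP=> C; rewrite in_interval => /andP[AC CB].
    case iC: (i \in C).
      apply: (subsetP sub); by rewrite in_interval sub1set iC CB.
    apply: h; rewrite in_interval AC /=; apply/subsetP=> x xC.
    by rewrite !inE (subsetP CB) // andbT; apply: contraNneq (negbT iC) => <-.
  case: ifP => _; [by rewrite exprS mulN1r addNr subrr | by rewrite add0r subr0].
rewrite e sum_sign.
have [E0|E0] := eqVneq (B :\ i) set0.
  by rewrite E0 Tset0 // eqxx subrr.
have -> : T (B :\ i) = 0.
  case BiF: (B :\ i \in F); last by rewrite Tnot ?BiF.
  apply: IH => //; apply: leq_trans Bm; rewrite (cardsD1 i B) iB.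
  by rewrite add1n ltnS.
by [].

Qed.
End T.

Theorem corollary1 (n : nat) (F : {set {set 'I_n}}) :
  simply_rooted F -> set0 \in F ->
  \sum_(0 <= k < n.+1) (-1) ^+ k * (#|Ck F k|)%:R = 1 :> int.
Proof.
move=> sr F0.
pose P := fun AB : {set 'I_n} * {set 'I_n} =>
  (AB.1 \subset AB.2) && (Defs.interval AB.1 AB.2 \subset F).
pose g := fun AB : {set 'I_n} * {set 'I_n} => (-1) ^+ #|AB.2 :\: AB.1| : int.
have cardn : forall AB : {set 'I_n} * {set 'I_n}, (#|AB.2 :\: AB.1| < n.+1)%N.
  by move=> AB; rewrite ltnS; apply: leq_trans (max_card _) _; rewrite card_ord.
have step1 : \sum_(0 <= k < n.+1) (-1) ^+ k * (#|Ck F k|)%:R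
    = \sum_(AB | P AB) g AB :> int.
  rewrite big_mkord (partition_big (fun AB => inord #|AB.2 :\: AB.1| : 'I_n.+1) predT) //=.
  apply: eq_bigr => k _; rewrite mulr_natr -sumr_const.
  apply: eq_big => AB.
    rewrite /Ck inE /P; congr (_ && _).
    apply/eqP/eqP => [e|<-]; first by apply: val_inj; rewrite /= inordK.
    by rewrite inordK.
  by rewrite /Ck inE => /andP[_ /eqP <-].
have step2 : \sum_(AB | P AB) g AB = \sum_(B : {set 'I_n}) @T n F B.
  rewrite big_mkcond /= -(pair_big predT predT (fun A B => if P (A, B) then g (A, B) else 0)) /=.
  rewrite exchange_big /=; apply: eq_bigr => B _.
  rewrite /T [RHS]big_mkcond; apply: eq_bigr => A _.
  by rewrite /P /g /=; case: (A \subset B).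
rewrite step1 step2 (bigD1 set0) //= Tset0 // big1 ?addr0 // => B B0.
case BF: (B \in F); first by apply: T0.
by rewrite Tnot ?BF.
Qed.
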